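(* Let $\kappa$ be a regular uncountable cardinal and $I$ a pleasant ideal on $\kappa$. If there is a thin set $S\in I^*$, then $I$ is quasinormal, and hence normal.
   Context: An ideal on $\kappa$ is a family of subsets of $\kappa$ closed under subsets and finite unions, which is $<\kappa$-complete and contains all singletons. $I^*=\{\kappa\setminus X: X\in I\}$. A set $S$ of ordinals is thin if $\alpha\in S$ implies $\alpha+1\notin S$. For $A\subseteq\kappa$ and $X_\alpha\subseteq\kappa$, $\bigtriangledown_{\alpha\in A}X_\alpha=\{\xi<\kappa:\exists\alpha<\xi\,(\alpha\in A\wedge \xi\in X_\alpha)\}$. $I$ is normal if $X_\alpha\in I$ for all $\alpha<\kappa$ implies $\bigtriangledown_{\alpha<\kappa}X_\alpha\in I$. $I$ is pleasant if whenever $A\in I$ and $X_\alpha\in I$ for all $\alpha$, then $\bigtriangledown_{\alpha\in A}X_\alpha\in I$. $I$ is quasinormal if for every sequence $\langle X_\alpha\rangle_{\alpha<\kappa}$ of members of $I$ there is $Q\in I^*$ with $\bigtriangledown_{\alpha\in Q}X_\alpha\in I$. *)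

(* Defs.v *)
(* The cardinal kappa is modelled as a type T carrying a strict
   well-order lt, which is an initial ordinal (a cardinal); subsets of kappa
   are predicates T -> Prop. *)

Definition injective {A B : Type} (f : A -> B) : Prop :=
  forall x y, f x = f y -> x = y.

Definition card_le (A B : Type) : Prop := exists f : A -> B, injective f.

Definition well_order {T : Type} (lt : T -> T -> Prop) : Prop :=
  (forall x, ~ lt x x) /\
  (forall x y z, lt x y -> lt y z -> lt x z) /\
  (forall x y, lt x y \/ x = y \/ lt y x) /\
  well_founded lt.

Definition le_of {T : Type} (lt : T -> T -> Prop) (x y : T) : Prop :=
  lt x y \/ x = y.

Definition is_cardinal {T : Type} (lt : T -> T -> Prop) : Prop :=
  forall a : T, ~ card_le T {x : T | lt x a}.

Definition uncountable (T : Type) : Prop := ~ card_le T nat.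

Definition regular {T : Type} (lt : T -> T -> Prop) : Prop :=
  forall X : T -> Prop,
    (forall a, exists x, X x /\ le_of lt a x) -> card_le T {x : T | X x}.

Definition is_succ {T : Type} (lt : T -> T -> Prop) (a b : T) : Prop :=
  lt a b /\ forall c, lt a c -> le_of lt b c.

Definition thin {T : Type} (lt : T -> T -> Prop) (S : T -> Prop) : Prop :=
  forall a b, S a -> is_succ lt a b -> ~ S b.

Definition is_ideal {T : Type} (I : (T -> Prop) -> Prop) : Prop :=
  (forall X Y : T -> Prop, I Y -> (forall x, X x -> Y x) -> I X) /\
  (forall X Y : T -> Prop, I X -> I Y -> I (fun x => X x \/ Y x)) /\
  (forall (J : Type) (F : J -> T -> Prop),
      ~ card_le T J -> (forall j, I (F j)) -> I (fun x => exists j, F j x)) /\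
  (forall a : T, I (fun x => x = a)).

Definition dual {T : Type} (I : (T -> Prop) -> Prop) (X : T -> Prop) : Prop :=
  I (fun x => ~ X x).

Definition diag_union {T : Type} (lt : T -> T -> Prop)
    (A : T -> Prop) (X : T -> T -> Prop) : T -> Prop :=
  fun xi => exists a, lt a xi /\ A a /\ X a xi.

Definition normal {T : Type} (lt : T -> T -> Prop) (I : (T -> Prop) -> Prop) :=
  forall X : T -> T -> Prop, (forall a, I (X a)) -> I (diag_union lt (fun _ => True) X).

Definition pleasant {T : Type} (lt : T -> T -> Prop) (I : (T -> Prop) -> Prop) :=
  forall (A : T -> Prop) (X : T -> T -> Prop),
    I A -> (forall a, I (X a)) -> I (diag_union lt A X).

Definition quasinormal {T : Type} (lt : T -> T -> Prop) (I : (T -> Prop) -> Prop) :=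
  forall X : T -> T -> Prop, (forall a, I (X a)) ->
    exists Q : T -> Prop, dual I Q /\ I (diag_union lt Q X).

(* Main.v *)
Require Import Defs.
From Stdlib Require Import Classical.

Lemma succ_exists (T : Type) (lt : T -> T -> Prop) (Hwo : well_order lt) (b : T) :
  (exists x, lt b x) -> exists m, is_succ lt b m.
Proof.
  destruct Hwo as [Hirr [Htr [Htri Hwf]]].
  intros [x Hx].
  assert (H : exists m, lt b m /\ forall c, lt b c -> ~ lt c m).
  { apply NNPP; intro Hn.
    assert (Hall : forall c, ~ lt b c).
    { intro c; induction (Hwf c) as [c _ IH]; intro Hbc.
      apply Hn; exists c; split; [exact Hbc|].
      intros d Hbd Hdc; exact (IH d Hdc Hbd). }
    exact (Hall x Hx). }
  destruct H as [m [Hm1 Hm2]]; exists m; split; [exact Hm1|].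
  intros c Hc; destruct (Htri m c) as [H|[H|H]].
  - left; exact H.
  - right; exact H.
  - exfalso; exact (Hm2 c Hc H).
Qed.

Theorem theorem3p11 (T : Type) (lt : T -> T -> Prop)
  (Hwo : well_order lt) (Hcard : is_cardinal lt) (Hunc : uncountable T)
  (Hreg : regular lt)
  (I : (T -> Prop) -> Prop) (HI : is_ideal I) (Hpl : pleasant lt I)
  (Hthin : exists S : T -> Prop, thin lt S /\ dual I S) :
  quasinormal lt I /\ normal lt I.
Proof.
  destruct HI as [Hsub [Hun [Hcomp Hsing]]].
  destruct Hthin as [S [HS HSd]].
  assert (Hq : quasinormal lt I).
  { intros X HX. exists S; split; [exact HSd|].
    set (Y := fun a xi => (exists j : {x : T | lt x a}, X (proj1_sig j) xi) \/ X a xi).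
    assert (HY : forall a, I (Y a)).
    { intro a; apply Hun; [|apply HX].
      apply (Hcomp {x : T | lt x a} (fun j => X (proj1_sig j))); [apply Hcard|].
      intro j; apply HX. }
    apply (Hsub _ (fun x => diag_union lt (fun a => ~ S a) Y x \/ ~ S x)).
    - apply Hun; [apply Hpl; [exact HSd | exact HY] | exact HSd].
    - intros xi [b [Hbxi [HbS Hxb]]].
      destruct (classic (S xi)) as [Hxi|Hxi]; [left|right; exact Hxi].
      destruct (succ_exists T lt Hwo b (ex_intro _ xi Hbxi)) as [m Hm].
      pose proof (HS b m HbS Hm) as HmS.
      destruct Hm as [Hbm Hm].
      destruct (Hm xi Hbxi) as [Hmxi|Heq]; [|subst; contradiction].
      exists m; split; [exact Hmxi|]; split; [exact HmS|].
      left; exists (exist _ b Hbm); exact Hxb. }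
  split; [exact Hq|].
  intros X HX. destruct (Hq X HX) as [Q [HQ HQX]].
  apply (Hsub _ (fun x => diag_union lt Q X x \/ diag_union lt (fun a => ~ Q a) X x)).
  - apply Hun; [exact HQX | apply Hpl; [exact HQ | exact HX]].
  - intros xi [a [Ha [_ Hx]]].
    destruct (classic (Q a)); [left|right]; exists a; auto.
Qed.
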